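(* Let $m\ge 2$, $d_x,d_y\ge 1$, and let $\mathscr{G}=([m],\mathcal{E})$ be an undirected, connected, simple graph. Let $W\in\mathbb{R}^{m\times m}$ be symmetric and row stochastic with $W_{ij}>0$ if and only if $(i,j)\in\mathcal{E}$, $W_{ii}>0$ for all $i$, and with eigenvalues $-1<\lambda_m\le\dots\le\lambda_2<\lambda_1=1$. Let $U=\sqrt{I_m-W}$ denote the positive semidefinite square root of $I_m-W$. For each $i\in[m]$ let $f_i:\mathbb{R}^{d_x}\times\mathbb{R}^{d_y}\to\mathbb{R}$ be differentiable, with $f_i(\cdot,y)$ $\mu_x$-strongly convex for every $y$ and $f_i(x,\cdot)$ $\mu_y$-strongly concave for every $x$ (for some $\mu_x,\mu_y>0$), and let $g:\mathbb{R}^{d_x}\to\mathbb{R}$, $r:\mathbb{R}^{d_y}\to\mathbb{R}$ be proper, convex, possibly non-smooth functions. For $\mathbf{x}=(x^1,\dots,x^m)\in\mathbb{R}^{md_x}$, $\mathbf{y}=(y^1,\dots,y^m)\in\mathbb{R}^{md_y}$ put $F(\mathbf{x},\mathbf{y})=\sum_{i=1}^m f_i(x^i,y^i)$, $G(\mathbf{x})=\sum_{i=1}^m g(x^i)$, $R(\mathbf{y})=\sum_{i=1}^m r(y^i)$, and consider the consensus-constrained saddle point problem $$\min_{\mathbf{x}\in\mathbb{R}^{md_x}}\max_{\mathbf{y}\in\mathbb{R}^{md_y}} F(\mathbf{x},\mathbf{y})+G(\mathbf{x})-R(\mathbf{y})\quad\text{s.t.}\quad (U\otimes I_{d_x})\mathbf{x}=0,\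 (U\otimes I_{d_y})\mathbf{y}=0 \qquad (\mathrm{P})$$ and the Lagrangian $$\mathcal{L}(\mathbf{x},\mathbf{y};S^{\mathbf{x}},S^{\mathbf{y}})=F(\mathbf{x},\mathbf{y})+G(\mathbf{x})-R(\mathbf{y})+\langle S^{\mathbf{x}},(U\otimes I_{d_x})\mathbf{x}\rangle+\langle S^{\mathbf{y}},(U\otimes I_{d_y})\mathbf{y}\rangle,$$ with $S^{\mathbf{x}}\in\mathbb{R}^{md_x}$, $S^{\mathbf{y}}\in\mathbb{R}^{md_y}$, together with the unconstrained saddle point problem $$\min_{\mathbf{x}\in\mathbb{R}^{md_x},\,S^{\mathbf{y}}\in\mathbb{R}^{md_y}}\ \max_{\mathbf{y}\in\mathbb{R}^{md_y},\,S^{\mathbf{x}}\in\mathbb{R}^{md_x}}\ \mathcal{L}(\mathbf{x},\mathbf{y};S^{\mathbf{x}},S^{\mathbf{y}}). \qquad (\mathrm{L})$$ Then $(\mathbf{x}^\star,\mathbf{y}^\star)$ is a saddle point of $(\mathrm{P})$ if and only if there exist $\tilde S^{\mathbf{x}}\in\mathbb{R}^{md_x}$, $\tilde S^{\mathbf{y}}\in\mathbb{R}^{md_y}$ such that $(\mathbf{x}^\star,\mathbf{y}^\star,\tilde S^{\mathbf{x}},\tilde S^{\mathbf{y}})$ is a saddle point of $(\mathrm{L})$.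
   Context: A saddle point of $(\mathrm{P})$ is a pair $(\mathbf{x}^\star,\mathbf{y}^\star)$ of feasible points (satisfying the two consensus constraints) such that $\mathbf{x}^\star$ minimizes $F(\cdot,\mathbf{y}^\star)+G(\cdot)-R(\mathbf{y}^\star)$ over feasible $\mathbf{x}$ and $\mathbf{y}^\star$ maximizes $F(\mathbf{x}^\star,\cdot)+G(\mathbf{x}^\star)-R(\cdot)$ over feasible $\mathbf{y}$. A saddle point of $(\mathrm{L})$ is a point $(\mathbf{x}^\star,\mathbf{y}^\star,\tilde S^{\mathbf{x}},\tilde S^{\mathbf{y}})$ such that $(\mathbf{x}^\star,\tilde S^{\mathbf{y}})$ minimizes $\mathcal{L}(\cdot,\mathbf{y}^\star;\tilde S^{\mathbf{x}},\cdot)$ and $(\mathbf{y}^\star,\tilde S^{\mathbf{x}})$ maximizes $\mathcal{L}(\mathbf{x}^\star,\cdot;\cdot,\tilde S^{\mathbf{y}})$. $\otimes$ denotes the Kronecker product and $I_d$ the $d\times d$ identity. *)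

(* Defs.v *)
From HB Require Import structures.
From mathcomp Require Import all_boot all_order all_algebra.
From mathcomp Require Import all_classical all_reals all_analysis.
From mathcomp Require Export mxtens.
Set Implicit Arguments. Unset Strict Implicit. Unset Printing Implicit Defensive.
Import Order.TTheory GRing.Theory Num.Theory.
Import numFieldNormedType.Exports.
Local Open Scope ring_scope.

(* Stacked vectors x = (x^1,...,x^m) in R^{m d} are column vectors 'cV_(m*d),
   with the standard Kronecker ordering: entry k of block i is at index
   mxtens_index (i,k) = i*d + k. *)
Definition blk (R : Type) (m d : nat) (x : 'cV[R]_(m * d)) (i : 'I_m) : 'rV[R]_d :=
  \row_k x (mxtens_index (i, k)) 0.

Definition kronI (R : pzRingType) (m d : nat) (A : 'M[R]_m) : 'M[R]_(m * d) :=
  tensmx A (1%:M : 'M[R]_d).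

Definition dotc (R : pzRingType) (n : nat) (u v : 'cV[R]_n) : R :=
  \sum_(k < n) u k 0 * v k 0.
Definition sqnorm (R : pzRingType) (n : nat) (v : 'rV[R]_n) : R :=
  \sum_(k < n) v 0 k ^+ 2.

Definition convex_fun (R : realType) (n : nat) (g : 'rV[R]_n -> R) : Prop :=
  forall (a b : 'rV[R]_n) (t : R), 0 <= t <= 1 ->
    g (t *: a + (1 - t) *: b) <= t * g a + (1 - t) * g b.

Definition strongly_convex (R : realType) (n : nat) (mu : R) (g : 'rV[R]_n -> R) : Prop :=
  forall (a b : 'rV[R]_n) (t : R), 0 <= t <= 1 ->
    g (t *: a + (1 - t) *: b)
      <= t * g a + (1 - t) * g b - mu / 2 * t * (1 - t) * sqnorm (a - b).

Definition strongly_concave (R : realType) (n : nat) (mu : R) (g : 'rV[R]_n -> R) : Prop :=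
  strongly_convex mu (fun v => - g v).

Definition objP (R : realType) (m dx dy : nat)
  (f : 'I_m -> 'rV[R]_dx -> 'rV[R]_dy -> R) (g : 'rV[R]_dx -> R) (r : 'rV[R]_dy -> R)
  (x : 'cV[R]_(m * dx)) (y : 'cV[R]_(m * dy)) : R :=
  \sum_(i < m) f i (blk x i) (blk y i)
  + \sum_(i < m) g (blk x i) - \sum_(i < m) r (blk y i).

Definition lagr (R : realType) (m dx dy : nat) (U : 'M[R]_m)
  (f : 'I_m -> 'rV[R]_dx -> 'rV[R]_dy -> R) (g : 'rV[R]_dx -> R) (r : 'rV[R]_dy -> R)
  (x : 'cV[R]_(m * dx)) (y : 'cV[R]_(m * dy)) (Sx : 'cV[R]_(m * dx)) (Sy : 'cV[R]_(m * dy)) : R :=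
  objP f g r x y + dotc Sx (kronI dx U *m x) + dotc Sy (kronI dy U *m y).

Definition saddleP (R : realType) (m dx dy : nat) (U : 'M[R]_m)
  (f : 'I_m -> 'rV[R]_dx -> 'rV[R]_dy -> R) (g : 'rV[R]_dx -> R) (r : 'rV[R]_dy -> R)
  (xs : 'cV[R]_(m * dx)) (ys : 'cV[R]_(m * dy)) : Prop :=
  [/\ kronI dx U *m xs = 0, kronI dy U *m ys = 0,
      (forall x, kronI dx U *m x = 0 -> objP f g r xs ys <= objP f g r x ys) &
      (forall y, kronI dy U *m y = 0 -> objP f g r xs y <= objP f g r xs ys)].

Definition saddleL (R : realType) (m dx dy : nat) (U : 'M[R]_m)
  (f : 'I_m -> 'rV[R]_dx -> 'rV[R]_dy -> R) (g : 'rV[R]_dx -> R) (r : 'rV[R]_dy -> R)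
  (xs : 'cV[R]_(m * dx)) (ys : 'cV[R]_(m * dy))
  (Sxs : 'cV[R]_(m * dx)) (Sys : 'cV[R]_(m * dy)) : Prop :=
  (forall x Sy, lagr U f g r xs ys Sxs Sys <= lagr U f g r x ys Sxs Sy) /\
  (forall y Sx, lagr U f g r xs y Sx Sys <= lagr U f g r xs ys Sxs Sys).

(* Main.v *)
Require Import Defs.
From HB Require Import structures.
From mathcomp Require Import all_boot all_order all_algebra.
From mathcomp Require Import all_classical all_reals all_analysis.
From mathcomp Require Import lra ring zify.
Import Order.TTheory GRing.Theory Num.Theory.
Import numFieldNormedType.Exports.
Local Open Scope ring_scope.
Local Open Scope classical_set_scope.
Set Implicit Arguments. Unset Strict Implicit. Unset Printing Implicit Defensive.
Lemma dir_ineq (R : realType) (V : normedModType R) (phi : V -> R) (p v : V) (c : R) :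
  differentiable phi p ->
  (forall t : R, 0 < t <= 1 -> 0 <= phi (t *: v + p) - phi p + t * c) ->
  0 <= 'd phi p v + c.
Proof.
move=> dphi H.
have dv : derivable phi p v by apply: diff_derivable.
rewrite -deriveE //.
set g := fun h : R => h^-1 *: ((phi \o shift p) (h *: v) - phi p).
have cg : g @ 0^' --> 'D_v phi p by exact: dv.
have sub : (0:R)^'+ `=>` (0:R)^'.
  move=> P /=; rewrite /dnbhs /at_right /within /=.
  apply: filterS => x Hx x0; apply: Hx; by rewrite gt_eqF.
have cg' : g @ 0^'+ --> 'D_v phi p by apply: cvg_trans cg; apply: cvg_app.
rewrite -lerBlDr sub0r.
have -> : 'D_v phi p = lim (g @ 0^'+) by apply/esym/cvg_lim.
apply: limr_ge; first by apply/cvg_ex; exists ('D_v phi p).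
near=> h.
have h0 : 0 < h by near: h; exact: nbhs_right_gt.
have h1 : h <= 1 by near: h; exact: nbhs_right_le.
have := H h; rewrite h0 h1 => /(_ isT) Hh.
rewrite /g /=.
rewrite -(ler_pM2l h0) mulrA mulfV ?gt_eqF // mul1r.
lra.
Unshelve. all: by end_near.
Qed.

Lemma dir_ineq_le (R : realType) (V : normedModType R) (phi : V -> R) (p v : V) (c : R) :
  differentiable phi p ->
  (forall t : R, 0 < t <= 1 -> phi (t *: v + p) - phi p <= t * c) ->
  'd phi p v <= c.
Proof.
move=> dphi H.
have := @dir_ineq R V (- phi) p v c (differentiableN dphi).
rewrite diffN //= => H2.
have : 0 <= - 'd phi p v + c.
  apply: H2 => t /H => Ht.
  have E : forall x, (- phi) x = - phi x by [].
  rewrite !E; lra.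
by rewrite addrC subr_ge0.
Qed.

Lemma diff_sumE (R : realType) (V : normedModType R) (I : eqType) (r : seq I)
  (phi : I -> V -> R) (z v : V) :
  (forall i, differentiable (phi i) z) ->
  differentiable (\sum_(i <- r) phi i) z /\
  'd (\sum_(i <- r) phi i) z v = \sum_(i <- r) 'd (phi i) z v.
Proof.
move=> dphi; elim: r => [|a r [IH1 IH2]].
  rewrite !big_nil; split; first exact: differentiable_cst.
  by rewrite diff_cst.
rewrite !big_cons; split; first exact: differentiableD.
by rewrite diffD // -IH2.
Qed.

Definition dotr (R : pzRingType) (n : nat) (a b : 'rV[R]_n) : R :=
  \sum_(k < n) a 0 k * b 0 k.

Lemma dotrBr (R : comPzRingType) n (a b c : 'rV[R]_n) : dotr a (b - c) = dotr a b - dotr a c.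
Proof. by rewrite /dotr -sumrB; apply: eq_bigr => k _; rewrite !mxE mulrBr. Qed.

Lemma dotrBl (R : comPzRingType) n (a b c : 'rV[R]_n) : dotr (a - b) c = dotr a c - dotr b c.
Proof. by rewrite /dotr -sumrB; apply: eq_bigr => k _; rewrite !mxE mulrBl. Qed.

Lemma dotrNl (R : comPzRingType) n (a c : 'rV[R]_n) : dotr (- a) c = - dotr a c.
Proof. by rewrite /dotr -sumrN; apply: eq_bigr => k _; rewrite !mxE mulNr. Qed.

Lemma dotrZl (R : comPzRingType) n (x : R) (a c : 'rV[R]_n) : dotr (x *: a) c = x * dotr a c.
Proof. by rewrite /dotr mulr_sumr; apply: eq_bigr => k _; rewrite !mxE mulrA. Qed.

Lemma dotr_suml (R : comPzRingType) n (I : Type) (r : seq I) (a : I -> 'rV[R]_n) c :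
  dotr (\sum_(i <- r) a i) c = \sum_(i <- r) dotr (a i) c.
Proof.
rewrite /dotr exchange_big; apply: eq_bigr => k _.
by rewrite summxE mulr_suml.
Qed.

Lemma dotr0l (R : comPzRingType) n (c : 'rV[R]_n) : dotr 0 c = 0.
Proof. by rewrite /dotr big1 // => k _; rewrite mxE mul0r. Qed.

Lemma lin_rep (R : realType) n (l : {linear 'rV[R]_n -> R}) (d : 'rV[R]_n) :
  l d = dotr (\row_k l 'e_k) d.
Proof.
rewrite {1}(row_sum_delta d) linear_sum /dotr; apply: eq_bigr => k _.
by rewrite linearZ mxE mulrC.
Qed.

Lemma block_opt (R : realType) (m n : nat) (phi : 'I_m -> 'rV[R]_n -> R)
  (G : 'rV[R]_n -> R) (z : 'rV[R]_n) :
  (0 < m)%N -> convex_fun G -> (forall i, convex_fun (phi i)) ->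
  (forall i, differentiable (phi i) z) ->
  (forall u, \sum_(i < m) (phi i z + G z) <= \sum_(i < m) (phi i u + G u)) ->
  exists s : 'I_m -> 'rV[R]_n, \sum_(i < m) s i = 0 /\
    forall u : 'I_m -> 'rV[R]_n,
      \sum_(i < m) (phi i z + G z)
        <= \sum_(i < m) (phi i (u i) + G (u i)) + \sum_(i < m) dotr (s i) (u i).
Proof.
move=> m0 hG hphi dphi hmin.
pose c i := \row_k 'd (phi i) z 'e_k.
have lc : forall i d, 'd (phi i) z d = dotr (c i) d by move=> i d; exact: lin_rep.
have gA : forall i u, phi i z + dotr (c i) (u - z) <= phi i u.
  move=> i u; rewrite -lc.
  have : 'd (phi i) z (u - z) <= phi i u - phi i z.
    apply: dir_ineq_le => // t /andP [t0 t1].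
    have := hphi i u z t; rewrite (ltW t0) t1 => /(_ isT).
    have -> : t *: u + (1 - t) *: z = t *: (u - z) + z.
      by rewrite scalerBr scalerBl scale1r [z - _]addrC addrA. 
    lra.
  lra.
pose Psi := \sum_(i < m) phi i.
have PsiE : forall x, Psi x = \sum_(i < m) phi i x.
  by move=> x; rewrite /Psi; elim/big_rec2: _ => // i y f _ <-.
have mR : (0 : R) < m%:R by rewrite ltr0n.
have gB : forall u, G z - G u <= m%:R^-1 * \sum_(i < m) dotr (c i) (u - z).
  move=> u.
  have [dPsi dPsiE] := diff_sumE (index_enum 'I_m) (u - z) dphi.
  have : 'd Psi z (u - z) + m%:R * (G u - G z) >= 0.
    apply: (@dir_ineq R _ Psi z (u - z) _ dPsi) => t /andP [t0 t1].
    rewrite (PsiE (t *: (u - z) + z)) (PsiE z).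
    have H1 : \sum_(i < m) phi i z + G z * m%:R <=
        \sum_(i < m) phi i (t *: (u - z) + z) + G (t *: (u - z) + z) * m%:R.
      by have := hmin (t *: (u - z) + z); rewrite !big_split !sumr_const !card_ord -!(mulr_natr (G _)).
    have := hG u z t; rewrite (ltW t0) t1 => /(_ isT).
    have -> : t *: u + (1 - t) *: z = t *: (u - z) + z.
      by rewrite scalerBr scalerBl scale1r [z - _]addrC addrA.
    move=> /(ler_wpM2r (ltW mR)) H2.
    lra.
  rewrite dPsiE (eq_bigr _ (fun i _ => lc i (u - z))) => H.
  rewrite ler_pdivlMl //; lra.
pose cb := m%:R^-1 *: \sum_(j < m) c j.
exists (fun i => cb - c i); split.
  rewrite sumrB sumr_const card_ord /cb -scaler_nat scalerA mulfV ?gt_eqF // scale1r.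
  by rewrite subrr.
move=> u.
have H0 : \sum_(i < m) dotr (cb - c i) z = 0.
  by rewrite -dotr_suml sumrB sumr_const card_ord /cb -scaler_nat scalerA mulfV ?gt_eqF // scale1r subrr dotr0l.
have E : \sum_(i < m) dotr (cb - c i) (u i) = \sum_(i < m) dotr (cb - c i) (u i - z).
  by rewrite (eq_bigr _ (fun i _ => dotrBr _ _ _)) sumrB H0 subr0.
rewrite E -big_split /=.
apply: ler_sum => i _.
have := gA i (u i); have := gB (u i).
rewrite dotrBl /cb dotrZl dotr_suml.
lra.
Qed.
Definition ones (R : pzRingType) (m : nat) : 'rV[R]_m := const_mx 1.

Lemma ones_U (R : realType) (m : nat) (W U : 'M[R]_m) :
  W^T = W -> (forall i, \sum_(j < m) W i j = 1) -> U^T = U -> U *m U = 1%:M - W ->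
  ones R m *m U = 0 /\ ones R m *m W = ones R m.
Proof.
move=> hWsym hWst hUsym hUsq.
have oW : ones R m *m W = ones R m.
  apply/matrixP => i j; rewrite !mxE -(hWst j).
  apply: eq_bigr => k _; rewrite mxE mul1r -{1}hWsym mxE //.
split=> //.
set u := ones R m *m U.
have uu : u *m u^T = 0.
  by rewrite /u trmx_mul hUsym mulmxA -(mulmxA _ U U) hUsq mulmxBr mulmx1 oW subrr mul0mx.
rewrite -/u; apply/matrixP => i j; rewrite [i]ord1 [RHS]mxE.
have := congr1 (fun M : 'M[R]_1 => M 0 0) uu; rewrite [LHS]mxE [RHS]mxE => H.
have Hk : forall k : 'I_m, true -> u 0 k * u^T k 0 = 0.
  by apply: psumr_eq0P H => k _; rewrite [u^T _ _]mxE -expr2 sqr_ge0.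
have := Hk j isT.
by rewrite [u^T _ _]mxE => /eqP; rewrite mulf_eq0 orbb => /eqP.
Qed.

Lemma kerU (R : realType) (m : nat) (W U : 'M[R]_m) :
  (0 < m)%N ->
  W^T = W -> (forall i, \sum_(j < m) W i j = 1) -> U^T = U -> U *m U = 1%:M - W ->
  \rank (eigenspace W 1) = 1%N ->
  forall v : 'rV[R]_m, v *m U = 0 -> exists c : R, v = c *: ones R m.
Proof.
move=> m0 hWsym hWst hUsym hUsq hr v vU.
have [oU oW] := ones_U hWsym hWst hUsym hUsq.
have vW : v *m W = 1 *: v.
  have : v *m U *m U = 0 by rewrite vU mul0mx.
  by rewrite -mulmxA hUsq mulmxBr mulmx1 scale1r => /eqP; rewrite subr_eq0 => /eqP <-.
have vE : (v <= eigenspace W 1)%MS by apply/eigenspaceP.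
have oE : (ones R m <= eigenspace W 1)%MS by apply/eigenspaceP; rewrite scale1r.
have o0 : ones R m != 0.
  apply/eqP => /matrixP /(_ 0 (Ordinal m0)); rewrite !mxE => /eqP; rewrite oner_eq0 //.
have ro : \rank (ones R m) = 1%N by rewrite rank_rV o0.
have Eo : (eigenspace W 1 <= ones R m)%MS.
  have := (mxrank_leqif_sup oE).2; rewrite ro hr eqxx => /esym //.
have : (v <= ones R m)%MS by apply: submx_trans Eo.
by case/sub_rVP => c ->; exists c.
Qed.

Lemma imU (R : realType) (m : nat) (W U : 'M[R]_m) :
  (0 < m)%N ->
  W^T = W -> (forall i, \sum_(j < m) W i j = 1) -> U^T = U -> U *m U = 1%:M - W ->
  \rank (eigenspace W 1) = 1%N ->
  forall w : 'cV[R]_m, \sum_(i < m) w i 0 = 0 -> exists a : 'cV[R]_m, U *m a = w.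
Proof.
move=> m0 hWsym hWst hUsym hUsq hr w sw.
have [oU oW] := ones_U hWsym hWst hUsym hUsq.
have o0 : ones R m != 0.
  apply/eqP => /matrixP /(_ 0 (Ordinal m0)); rewrite !mxE => /eqP; rewrite oner_eq0 //.
set c1 := (ones R m)^T.
have rc1 : \rank c1 = 1%N by rewrite mxrank_tr rank_rV o0.
have rk1 : \rank (kermx c1) = (m - 1)%N by rewrite mxrank_ker rc1.
have kU : (kermx U == ones R m)%MS.
  apply/andP; split.
    apply/row_subP => i.
    have : row i (kermx U) *m U = 0 by rewrite -row_mul mulmx_ker row0.
    case/(kerU m0 hWsym hWst hUsym hUsq hr) => c ->.
    by rewrite scalemx_sub.
  by apply/sub_kermxP.
have rkU : \rank U = (m - 1)%N.
  have := mxrank_ker U; rewrite (eqmxP kU) rank_rV o0.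
  have := rank_leq_row U. lia.
have Uk : (U <= kermx c1)%MS.
  by apply/sub_kermxP; rewrite /c1 -{1}hUsym -trmx_mul oU trmx0.
have kc1U : (kermx c1 <= U)%MS.
  by have := (mxrank_leqif_sup Uk).2; rewrite rk1 rkU eqxx => /esym.
have wk : (w^T <= kermx c1)%MS.
  apply/sub_kermxP; apply/matrixP => i j; rewrite [i]ord1 [j]ord1 !mxE -[RHS]sw.
  by apply: eq_bigr => k _; rewrite !mxE mulr1.
have : (w^T <= U)%MS by apply: submx_trans kc1U.
case/submxP => D wD; exists D^T.
by rewrite -hUsym -trmx_mul -wD trmxK.
Qed.

Lemma sum_tens (R : nmodType) m d (F : 'I_(m * d) -> R) :
  \sum_(p < m * d) F p = \sum_(i < m) \sum_(k < d) F (mxtens_index (i, k)).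
Proof.
rewrite pair_big (reindex (@mxtens_index m d)) /=.
  by apply: eq_bigr => -[i k] _.
by exists (@mxtens_unindex m d) => p _; rewrite (mxtens_indexK, mxtens_unindexK).
Qed.

Lemma Kx (R : realType) m d (U : 'M[R]_m) (x : 'cV[R]_(m * d)) i k :
  (kronI d U *m x) (mxtens_index (i, k)) 0 = \sum_(j < m) U i j * x (mxtens_index (j, k)) 0.
Proof.
rewrite mxE sum_tens; apply: eq_bigr => j _.
rewrite (bigD1 k) //= /kronI tensmxE mxE eqxx mulr1n mulr1 big1 ?addr0 // => l lk.
by rewrite tensmxE mxE eq_sym (negbTE lk) mulr0n mulr0 mul0r.
Qed.

Lemma kron_sym (R : realType) m d (U : 'M[R]_m) : U^T = U -> (kronI d U)^T = kronI d U.
Proof. by move=> hU; rewrite /kronI trmx_tens hU trmx1. Qed.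

Lemma dotc_swap (R : realType) n (u v : 'cV[R]_n) (A : 'M[R]_n) :
  dotc u (A *m v) = dotc (A^T *m u) v.
Proof.
rewrite /dotc.
under eq_bigr do rewrite mxE big_distrr.
under [RHS]eq_bigr do rewrite mxE big_distrl.
rewrite exchange_big; apply: eq_bigr => q _; apply: eq_bigr => p _.
by rewrite /= mxE; ring.
Qed.

Definition consv (R : Type) m d (u : 'rV[R]_d) : 'cV[R]_(m * d) :=
  \col_p u 0 (mxtens_unindex p).2.

Lemma blk_consv (R : Type) m d (u : 'rV[R]_d) (i : 'I_m) : blk (consv m u) i = u.
Proof. by apply/rowP => k; rewrite !mxE mxtens_indexK. Qed.

Lemma K_consv (R : realType) m d (U : 'M[R]_m) (u : 'rV[R]_d) :
  U^T = U -> ones R m *m U = 0 -> kronI d U *m consv m u = 0.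
Proof.
move=> hU oU; apply/matrixP => p j0; rewrite [j0]ord1.
case: (mxtens_indexP p) => i k; rewrite Kx mxE.
have -> : \sum_(j < m) U i j * consv m u (mxtens_index (j, k)) 0 = (\sum_(j < m) U i j) * u 0 k.
  by rewrite mulr_suml; apply: eq_bigr => j _; rewrite mxE mxtens_indexK.
have -> : \sum_(j < m) U i j = (ones R m *m U) 0 i.
  by rewrite mxE; apply: eq_bigr => j _; rewrite mxE mul1r -{1}hU mxE.
by rewrite oU mxE mul0r.
Qed.

Lemma ker_blk (R : realType) (m d : nat) (W U : 'M[R]_m) :
  (0 < m)%N ->
  W^T = W -> (forall i, \sum_(j < m) W i j = 1) -> U^T = U -> U *m U = 1%:M - W ->
  \rank (eigenspace W 1) = 1%N ->
  forall x : 'cV[R]_(m * d), kronI d U *m x = 0 -> forall i j, blk x i = blk x j.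
Proof.
move=> m0 hWsym hWst hUsym hUsq hr x Kx0 i j.
apply/rowP => k; rewrite !mxE.
pose v : 'rV[R]_m := \row_j x (mxtens_index (j, k)) 0.
have vU : v *m U = 0.
  apply/rowP => l; rewrite !mxE.
  have := congr1 (fun M : 'cV[R]_(m * d) => M (mxtens_index (l, k)) 0) Kx0.
  rewrite /= Kx mxE => H; rewrite -[RHS]H; apply: eq_bigr => q _.
  by rewrite mxE mulrC -{1}hUsym mxE.
have [c vc] := kerU m0 hWsym hWst hUsym hUsq hr vU.
have := congr1 (fun M : 'rV[R]_m => M 0 i) vc; have := congr1 (fun M : 'rV[R]_m => M 0 j) vc.
by rewrite /= !mxE => -> ->.
Qed.

Lemma range_dot (R : realType) (m d : nat) (W U : 'M[R]_m) :
  (0 < m)%N ->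
  W^T = W -> (forall i, \sum_(j < m) W i j = 1) -> U^T = U -> U *m U = 1%:M - W ->
  \rank (eigenspace W 1) = 1%N ->
  forall s : 'I_m -> 'rV[R]_d, \sum_(i < m) s i = 0 ->
  exists S : 'cV[R]_(m * d), forall x : 'cV[R]_(m * d),
    dotc S (kronI d U *m x) = \sum_(i < m) dotr (s i) (blk x i).
Proof.
move=> m0 hWsym hWst hUsym hUsq hr s s0.
have : forall k : 'I_d, exists a : 'cV[R]_m, U *m a = \col_i s i 0 k.
  move=> k; apply: (imU m0 hWsym hWst hUsym hUsq hr).
  have := congr1 (fun M : 'rV[R]_d => M 0 k) s0; rewrite /= summxE mxE => H; rewrite -[RHS]H.
  by apply: eq_bigr => i _; rewrite mxE.
case/boolp.choice => a ha.
exists (\col_p a (mxtens_unindex p).2 (mxtens_unindex p).1 0) => x.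
rewrite dotc_swap kron_sym // /dotc sum_tens; apply: eq_bigr => i _.
rewrite /dotr; apply: eq_bigr => k _.
rewrite Kx.
have := congr1 (fun M : 'cV[R]_m => M i 0) (ha k); rewrite /= !mxE => <-.
congr (_ * _); apply: eq_bigr => j _; rewrite mxE; have E := mxtens_indexK (j, k); rewrite /mxtens_unindex in E; case: E => -> -> //.
Qed.

Lemma sc_convex (R : realType) n (mu : R) (h : 'rV[R]_n -> R) :
  0 < mu -> strongly_convex mu h -> convex_fun h.
Proof.
move=> mu0 H a b t t01; have := H a b t t01.
case/andP: t01 => t0 t1.
have : 0 <= mu / 2 * t * (1 - t) * sqnorm (a - b).
  apply: mulr_ge0; last by apply: sumr_ge0 => k _; apply: sqr_ge0.
  apply: mulr_ge0; last by rewrite subr_ge0.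
  apply: mulr_ge0 => //; apply: divr_ge0 => //; exact: ltW.
lra.
Qed.

Lemma dotc0r (R : pzRingType) n (u : 'cV[R]_n) : dotc u 0 = 0.
Proof. by rewrite /dotc big1 // => k _; rewrite mxE mulr0. Qed.

Lemma dotcBl (R : comPzRingType) n (a b c : 'cV[R]_n) : dotc (a - b) c = dotc a c - dotc b c.
Proof. by rewrite /dotc -sumrB; apply: eq_bigr => k _; rewrite !mxE mulrBl. Qed.

Lemma dotcDl (R : comPzRingType) n (a b c : 'cV[R]_n) : dotc (a + b) c = dotc a c + dotc b c.
Proof. by rewrite /dotc -big_split; apply: eq_bigr => k _; rewrite !mxE mulrDl. Qed.

Lemma dotc_self (R : realType) n (w : 'cV[R]_n) : dotc w w <= 0 -> w = 0.
Proof.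
move=> H.
have H0 : dotc w w = 0.
  apply/eqP; rewrite eq_le H /=; apply: sumr_ge0 => k _; rewrite -expr2; exact: sqr_ge0.
have Hk : forall k : 'I_n, true -> w k 0 * w k 0 = 0.
  by apply: psumr_eq0P H0 => k _; rewrite -expr2 sqr_ge0.
apply/matrixP => k j; rewrite [j]ord1 mxE.
by have := Hk k isT => /eqP; rewrite mulf_eq0 orbb => /eqP.
Qed.

Lemma dot_zero1 (R : realType) n (S0 w : 'cV[R]_n) :
  (forall S, dotc S0 w <= dotc S w) -> w = 0.
Proof.
move=> H; apply: dotc_self; have := H (S0 - w); rewrite dotcBl; lra.
Qed.

Lemma dot_zero2 (R : realType) n (S0 w : 'cV[R]_n) :
  (forall S, dotc S w <= dotc S0 w) -> w = 0.
Proof.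
move=> H; apply: dotc_self; have := H (S0 + w); rewrite dotcDl; lra.
Qed.

Lemma objP_eq (R : realType) (m dx dy : nat)
  (f : 'I_m -> 'rV[R]_dx -> 'rV[R]_dy -> R) (g : 'rV[R]_dx -> R) (r : 'rV[R]_dy -> R)
  (x : 'cV[R]_(m * dx)) (y : 'cV[R]_(m * dy)) a b :
  (forall i, blk x i = a i) -> (forall i, blk y i = b i) ->
  objP f g r x y = \sum_(i < m) f i (a i) (b i) + \sum_(i < m) g (a i) - \sum_(i < m) r (b i).
Proof.
move=> ha hb; rewrite /objP; congr (_ + _ - _); apply: eq_bigr => i _; by rewrite ?ha ?hb.
Qed.

Unset Implicit Arguments.
Local Close Scope classical_set_scope.

Theorem theorem1 (R : realType) (m dx dy : nat)
  (hm : (2 <= m)%N) (hdx : (1 <= dx)%N) (hdy : (1 <= dy)%N)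
  (* undirected, connected, simple graph on [m] *)
  (E : rel 'I_m)
  (hEsym : symmetric E) (hEirr : irreflexive E)
  (hEconn : forall i j : 'I_m, connect E i j)
  (* mixing matrix W *)
  (W : 'M[R]_m)
  (hWsym : W^T = W)
  (hWstoch : forall i : 'I_m, \sum_(j < m) W i j = 1)
  (hWpos : forall i j : 'I_m, i != j -> (0 < W i j <-> E i j))
  (hWdiag : forall i : 'I_m, 0 < W i i)
  (hWeig : forall a : R, eigenvalue W a -> -1 < a <= 1)
  (hWeig1 : \rank (eigenspace W 1) = 1%N)
  (* U = the positive semidefinite square root of I - W *)
  (U : 'M[R]_m)
  (hUsym : U^T = U)
  (hUpsd : forall v : 'rV[R]_m, 0 <= (v *m U *m v^T) 0 0)
  (hUsq : U *m U = 1%:M - W)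
  (* local functions *)
  (f : 'I_m -> 'rV[R]_dx -> 'rV[R]_dy -> R) (g : 'rV[R]_dx -> R) (r : 'rV[R]_dy -> R)
  (mux muy : R) (hmux : 0 < mux) (hmuy : 0 < muy)
  (hfdiff : forall (i : 'I_m) (p : 'rV[R]_dx * 'rV[R]_dy),
     differentiable (fun q : 'rV[R]_dx * 'rV[R]_dy => f i q.1 q.2) p)
  (hfx : forall (i : 'I_m) (y : 'rV[R]_dy), strongly_convex mux (fun x => f i x y))
  (hfy : forall (i : 'I_m) (x : 'rV[R]_dx), strongly_concave muy (fun y => f i x y))
  (hg : convex_fun g) (hr : convex_fun r)
  (xs : 'cV[R]_(m * dx)) (ys : 'cV[R]_(m * dy)) :
  saddleP U f g r xs ys <->
  exists (Sxs : 'cV[R]_(m * dx)) (Sys : 'cV[R]_(m * dy)),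
    saddleL U f g r xs ys Sxs Sys.
Proof.
have m0 : (0 < m)%N by apply: leq_trans hm.
have [oU oW] := ones_U hWsym hWstoch hUsym hUsq.
split.
- case=> Kxs Kys Hx Hy.
  pose i0 := Ordinal m0.
  have bx := ker_blk m0 hWsym hWstoch hUsym hUsq hWeig1 Kxs.
  have by_ := ker_blk m0 hWsym hWstoch hUsym hUsq hWeig1 Kys.
  set zx := blk xs i0; set zy := blk ys i0.
  have Ex : forall i, blk xs i = zx by move=> i; exact: bx.
  have Ey : forall i, blk ys i = zy by move=> i; exact: by_.
  have dfx : forall i, differentiable (fun u => f i u (blk ys i)) zx.
    move=> i.
    have -> : (fun u => f i u (blk ys i)) = (fun q : 'rV[R]_dx * 'rV[R]_dy => f i q.1 q.2) \o (fun u => (u, blk ys i)) by [].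
    apply: differentiable_comp; last exact: hfdiff.
    by apply: differentiable_pair => //; exact: differentiable_cst.
  have mx : forall u, \sum_(i < m) (f i zx (blk ys i) + g zx) <= \sum_(i < m) (f i u (blk ys i) + g u).
    move=> u; have := Hx (consv m u) (K_consv u hUsym oU).
    rewrite (objP_eq f g r Ex (fun i => erefl)) (objP_eq f g r (fun i => blk_consv u i) (fun i => erefl)).
    rewrite !big_split /=; lra.
  have dfy : forall i, differentiable (fun w => - f i (blk xs i) w) zy.
    move=> i.
    have -> : (fun w => - f i (blk xs i) w) = - ((fun q : 'rV[R]_dx * 'rV[R]_dy => f i q.1 q.2) \o (fun w => (blk xs i, w))) by [].
    apply: differentiableN; apply: differentiable_comp; last exact: hfdiff.
    by apply: differentiable_pair => //; exact: differentiable_cst.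
  have my : forall w, \sum_(i < m) (- f i (blk xs i) zy + r zy) <= \sum_(i < m) (- f i (blk xs i) w + r w).
    move=> w; have := Hy (consv m w) (K_consv w hUsym oU).
    rewrite (objP_eq f g r (fun i => erefl) Ey) (objP_eq f g r (fun i => erefl) (fun i => blk_consv w i)).
    rewrite !big_split /= !sumrN; lra.
  have [sx [sx0 hsx]] := @block_opt R m dx (fun i u => f i u (blk ys i)) g zx m0 hg
    (fun i => sc_convex hmux (hfx i (blk ys i))) dfx mx.
  have [sy [sy0 hsy]] := @block_opt R m dy (fun i w => - f i (blk xs i) w) r zy m0 hr
    (fun i => sc_convex hmuy (hfy i (blk xs i))) dfy my.
  have [Sxs hSx] := range_dot (d := dx) m0 hWsym hWstoch hUsym hUsq hWeig1 sx0.
  have sy0' : \sum_(i < m) - sy i = 0 by rewrite sumrN sy0 oppr0.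
  have [Sys hSy] := range_dot (d := dy) m0 hWsym hWstoch hUsym hUsq hWeig1 sy0'.
  exists Sxs, Sys; split.
  + move=> x Sy; rewrite /lagr Kxs Kys !dotc0r hSx.
    rewrite (objP_eq f g r Ex (fun i => erefl)) (objP_eq f g r (fun i => erefl) (fun i => erefl)).
    have := hsx (fun i => blk x i); rewrite !big_split /=.
    lra.
  + move=> y Sx; rewrite /lagr Kxs Kys !dotc0r hSy (eq_bigr _ (fun i _ => dotrNl _ _)) sumrN.
    rewrite (objP_eq f g r (fun i => erefl) Ey) (objP_eq f g r (fun i => erefl) (fun i => erefl)).
    have := hsy (fun i => blk y i); rewrite !big_split /= !sumrN.
    lra.
- case=> Sxs [Sys [H1 H2]].
  have Kys : kronI dy U *m ys = 0.
    apply: (@dot_zero1 _ _ Sys) => S; have := H1 xs S; rewrite /lagr; lra.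
  have Kxs : kronI dx U *m xs = 0.
    apply: (@dot_zero2 _ _ Sxs) => S; have := H2 ys S; rewrite /lagr; lra.
  split => //.
  + move=> x Kx0; have := H1 x Sys; rewrite /lagr Kx0 Kxs Kys !dotc0r; lra.
  + move=> y Ky0; have := H2 y Sxs; rewrite /lagr Ky0 Kxs Kys !dotc0r; lra.
Qed.
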